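(* Let $\mathbf{t}\in\mathrm{Sym}^2(\mathbb{R}^3)$ be transversely isotropic and $\mathbf{H}\in\mathbb{H}^4$. Then the pair $(\mathbf{H},\mathbf{t})$ is trigonal, tetragonal or transversely isotropic iff the triple $(\mathbf{d}_2,\mathbf{t},\mathbf{H}:\mathbf{t})$ is transversely isotropic.
   Context: $\mathbb{H}^4$ is the space of totally symmetric traceless fourth-order tensors on $\mathbb{R}^3$, with $SO(3)$-action $(g\star\mathbf{T})(x_1,\dots,x_n)=\mathbf{T}(g^{-1}x_1,\dots,g^{-1}x_n)$. $(\mathbf{H}:\mathbf{H})_{ijkl}=H_{ijmn}H_{mnkl}$, $(\mathbf{H}:\mathbf{a})_{ij}=H_{ijkl}a_{kl}$, $(\operatorname{tr}_{13}\mathbf{A})_{ij}=A_{kikj}$, $\mathbf{d}_2=\operatorname{tr}_{13}(\mathbf{H}:\mathbf{H})$. Symmetry group of a family: intersection of $\{g:g\star\mathbf{T}=\mathbf{T}\}$; class: conjugacy class. Transversely isotropic $=[O(2)]$, tetragonal $=[\mathbb{D}_4]$, trigonal $=[\mathbb{D}_3]$ ($O(2)$: rotations about the $z$-axis and the rotation by $\pi$ about the $x$-axis; $\mathbb{D}_n$ generated by the rotation by $2\pi/n$ about the $z$-axis and the rotation by $\pi$ about the $x$-axis). *)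

(* Defs.v *)
From HB Require Import structures.
From mathcomp Require Import all_boot all_order all_algebra all_fingroup.
From mathcomp Require Import all_classical all_reals all_analysis.
Set Implicit Arguments. Unset Strict Implicit. Unset Printing Implicit Defensive.
Import Order.TTheory GRing.Theory Num.Theory.
Local Open Scope classical_set_scope.
Local Open Scope ring_scope.

Section Defs.
Variable R : realType.

Definition tensor2 := 'M[R]_3.
Definition tensor4 := 'I_3 -> 'I_3 -> 'I_3 -> 'I_3 -> R.

Definition SO3 : set 'M[R]_3 :=
  [set g | g *m g^T = 1%:M /\ \det g = 1].

(* Action (g * T)(x1,..,xn) = T(g^-1 x1, .., g^-1 xn), in components *)
Definition act2 (g : 'M[R]_3) (t : tensor2) : tensor2 :=
  \matrix_(i < 3, j < 3)
    \sum_(a < 3) \sum_(b < 3) invmx g a i * invmx g b j * t a b.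

Definition act4 (g : 'M[R]_3) (H : tensor4) : tensor4 :=
  fun i j k l =>
    \sum_(a < 3) \sum_(b < 3) \sum_(c < 3) \sum_(d < 3)
      invmx g a i * invmx g b j * invmx g c k * invmx g d l * H a b c d.

Definition is_sym2 (t : tensor2) : Prop := t^T = t.

Definition totally_symmetric4 (H : tensor4) : Prop :=
  forall (s : 'S_4) (x : 'I_4 -> 'I_3),
    let y := fun m => x (s m) in
    H (y (inord 0)) (y (inord 1)) (y (inord 2)) (y (inord 3))
    = H (x (inord 0)) (x (inord 1)) (x (inord 2)) (x (inord 3)).

Definition traceless4 (H : tensor4) : Prop :=
  forall k l : 'I_3, \sum_(i < 3) H i i k l = 0.

Definition isH4 (H : tensor4) : Prop := totally_symmetric4 H /\ traceless4 H.

Definition ddot44 (H K : tensor4) : tensor4 :=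
  fun i j k l => \sum_(m < 3) \sum_(n < 3) H i j m n * K m n k l.

Definition tr13 (A : tensor4) : tensor2 :=
  \matrix_(i < 3, j < 3) \sum_(k < 3) A k i k j.

Definition d2 (H : tensor4) : tensor2 := tr13 (ddot44 H H).

Definition ddot42 (H : tensor4) (a : tensor2) : tensor2 :=
  \matrix_(i < 3, j < 3) \sum_(k < 3) \sum_(l < 3) H i j k l * a k l.

Definition symgroup2 (t : tensor2) : set 'M[R]_3 :=
  [set g | SO3 g /\ act2 g t = t].

Definition symgroup_pair (H : tensor4) (t : tensor2) : set 'M[R]_3 :=
  [set g | SO3 g /\ act4 g H = H /\ act2 g t = t].

Definition symgroup_triple (a b c : tensor2) : set 'M[R]_3 :=
  [set g | SO3 g /\ act2 g a = a /\ act2 g b = b /\ act2 g c = c].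

Definition in_class (G K : set 'M[R]_3) : Prop :=
  exists2 g, SO3 g & G = [set g *m k *m invmx g | k in K].

Definition mx3 (a b c d e f p q r : R) : 'M[R]_3 :=
  \matrix_(i < 3, j < 3)
    nth 0 (nth [::] [:: [:: a; b; c]; [:: d; e; f]; [:: p; q; r]] i) j.

Definition rotz (theta : R) : 'M[R]_3 :=
  mx3 (cos theta) (- sin theta) 0 (sin theta) (cos theta) 0 0 0 1.
Definition rotx_pi : 'M[R]_3 := mx3 1 0 0 0 (-1) 0 0 0 (-1).

Definition O2 : set 'M[R]_3 :=
  [set rotz th | th in [set: R]] `|` [set rotz th *m rotx_pi | th in [set: R]].

Definition Dn (n : nat) : set 'M[R]_3 :=
  [set rotz (2 * pi * k%:R / n%:R) | k in [set k : nat | (k < n)%N]]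
  `|` [set rotz (2 * pi * k%:R / n%:R) *m rotx_pi | k in [set k : nat | (k < n)%N]].

Definition transversely_isotropic (G : set 'M[R]_3) : Prop := in_class G O2.
Definition tetragonal (G : set 'M[R]_3) : Prop := in_class G (Dn 4).
Definition trigonal (G : set 'M[R]_3) : Prop := in_class G (Dn 3).

End Defs.

(* Main.v *)
Require Import Defs.
From HB Require Import structures.
From mathcomp Require Import all_boot all_order all_algebra all_fingroup.
From mathcomp Require Import all_classical all_reals all_analysis.
From mathcomp Require Import ring lra zify.
Import Order.TTheory GRing.Theory Num.Theory.
Local Open Scope ring_scope.
Set Implicit Arguments. Unset Strict Implicit. Unset Printing Implicit Defensive.

Definition o0 : 'I_3 := @Ordinal 3 0 isT.
Definition o1 : 'I_3 := @Ordinal 3 1 isT.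
Definition o2 : 'I_3 := @Ordinal 3 2 isT.
Lemma ord3 (i : 'I_3) : i = o0 \/ i = o1 \/ i = o2.
Proof.
case: i => [[|[|[|n]]] Hn]; [left|right;left|right;right|by []]; exact: val_inj.
Qed.

Ltac ord3c i := case: (ord3 i) => [->|[->|->]].

Section Infra.
Variable R : realType.
Implicit Types (a b c d e f g h i : R).

Lemma sum3 (F : 'I_3 -> R) : \sum_(a < 3) F a = F o0 + F o1 + F o2.
Proof.
rewrite !big_ord_recr big_ord0 /= add0r.
by congr (F _ + F _ + F _); apply: val_inj.
Qed.

Lemma mx3_ext (A : 'M[R]_3) :
  A = mx3 (A o0 o0) (A o0 o1) (A o0 o2) (A o1 o0) (A o1 o1) (A o1 o2)
          (A o2 o0) (A o2 o1) (A o2 o2).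
Proof. by apply/matrixP => i j; ord3c i; ord3c j; rewrite /mx3 mxE. Qed.

Lemma mx3_mul a b c d e f g h i a' b' c' d' e' f' g' h' i' :
  @mx3 R a b c d e f g h i *m mx3 a' b' c' d' e' f' g' h' i' =
  mx3 (a*a' + b*d' + c*g') (a*b' + b*e' + c*h') (a*c' + b*f' + c*i')
      (d*a' + e*d' + f*g') (d*b' + e*e' + f*h') (d*c' + e*f' + f*i')
      (g*a' + h*d' + i*g') (g*b' + h*e' + i*h') (g*c' + h*f' + i*i').
Proof.
by apply/matrixP => x y; rewrite mxE sum3; ord3c x; ord3c y; rewrite /mx3 !mxE.
Qed.

Lemma mx3_tr a b c d e f g h i :
  (@mx3 R a b c d e f g h i)^T = mx3 a d g b e h c f i.
Proof. by apply/matrixP => x y; ord3c x; ord3c y; rewrite /mx3 !mxE. Qed.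

Lemma mx3_1 : (1%:M : 'M[R]_3) = mx3 1 0 0 0 1 0 0 0 1.
Proof. by apply/matrixP => x y; ord3c x; ord3c y; rewrite /mx3 !mxE. Qed.

Lemma mx3_det a b c d e f g h i :
  \det (@mx3 R a b c d e f g h i) = a*e*i - a*f*h - b*d*i + b*f*g + c*d*h - c*e*g.
Proof.
rewrite (expand_det_row _ o0) sum3 /cofactor.
rewrite !(expand_det_row _ ord0) /cofactor !big_ord_recr !big_ord0 /= !det_mx11.
rewrite /mx3 !mxE /= !add0r; ring.
Qed.

End Infra.

Section B.
Variable R : realType.
Local Notation rx := (@rotx_pi R).
Implicit Types (M g : 'M[R]_3) (X Y H : tensor4 R).

Lemma t4ext X Y : (forall i j k l, X i j k l = Y i j k l) -> X = Y.
Proof.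
move=> E; apply: funext => i; apply: funext => j; apply: funext => k; apply: funext => l.
exact: E.
Qed.

Lemma rotzD a b : rotz a *m rotz b = rotz (a + b) :> 'M[R]_3.
Proof. by rewrite /rotz mx3_mul cosD sinD; congr mx3; ring. Qed.
Lemma rotz_tr a : (rotz a)^T = rotz (- a) :> 'M[R]_3.
Proof. by rewrite /rotz mx3_tr cosN sinN; congr mx3; ring. Qed.
Lemma rotz0 : rotz 0 = 1%:M :> 'M[R]_3.
Proof. by rewrite /rotz mx3_1 cos0 sin0 oppr0. Qed.
Lemma rotx2 : rx *m rx = 1%:M :> 'M[R]_3.
Proof. by rewrite /rotx_pi mx3_mul mx3_1; congr mx3; ring. Qed.
Lemma rotx_rotz a : rx *m rotz a = rotz (- a) *m rx :> 'M[R]_3.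
Proof. by rewrite /rotx_pi /rotz !mx3_mul cosN sinN; congr mx3; ring. Qed.
Lemma flip2 a : (rotz a *m rx) *m (rotz a *m rx) = 1%:M :> 'M[R]_3.
Proof.
by rewrite mulmxA -(mulmxA (rotz a)) rotx_rotz mulmxA rotzD subrr rotz0 mul1mx rotx2.
Qed.

Lemma SO3_trmx_mul g : SO3 g -> g^T *m g = 1%:M.
Proof. by case=> h _; apply: mulmx1C. Qed.
Lemma SO3_inv g : SO3 g -> invmx g = g^T.
Proof.
move=> [h _]; have [u _] := mulmx1_unit h.
by rewrite -[invmx g]mulmx1 -h mulmxA mulVmx // mul1mx.
Qed.
Lemma SO3_1 : SO3 (1%:M : 'M[R]_3).
Proof. by split; rewrite ?trmx1 ?mulmx1 ?det1. Qed.
Lemma SO3_mul g h : SO3 g -> SO3 h -> SO3 (g *m h).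
Proof.
move=> [g1 g2] [h1 h2]; split; last by rewrite det_mulmx g2 h2 mulr1.
by rewrite trmx_mul mulmxA -(mulmxA g) h1 mulmx1 g1.
Qed.
Lemma SO3_tr g : SO3 g -> SO3 g^T.
Proof. move=> hg; split; last by rewrite det_tr; case: hg.
by rewrite trmxK SO3_trmx_mul. Qed.

Lemma act2E g t : SO3 g -> act2 g t = g *m t *m g^T.
Proof.
move=> hg; apply/matrixP => i j; rewrite /act2 SO3_inv // !mxE.
rewrite exchange_big; apply: eq_bigr => b _; rewrite !mxE mulr_suml.
by apply: eq_bigr => a _; rewrite !mxE; ring.
Qed.

Definition sl1 M X : tensor4 R := fun i j k l => \sum_(a < 3) M i a * X a j k l.
Definition sl2 M X : tensor4 R := fun i j k l => \sum_(a < 3) M j a * X i a k l.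
Definition sl3 M X : tensor4 R := fun i j k l => \sum_(a < 3) M k a * X i j a l.
Definition sl4 M X : tensor4 R := fun i j k l => \sum_(a < 3) M l a * X i j k a.
Definition act4' M X := sl1 M (sl2 M (sl3 M (sl4 M X))).

Lemma act4E g H : SO3 g -> act4 g H = act4' g H.
Proof.
move=> hg; apply: t4ext => i j k l; rewrite /act4 /act4' /sl1 /sl2 /sl3 /sl4 SO3_inv //.
apply: eq_bigr => a _; rewrite !mulr_sumr; apply: eq_bigr => b _.
rewrite !mulr_sumr; apply: eq_bigr => c _; rewrite !mulr_sumr; apply: eq_bigr => d _.
by rewrite !mxE; ring.
Qed.

Ltac slcomm := apply: t4ext => i j k l; rewrite /sl1 /sl2 /sl3 /sl4;
  under eq_bigr do rewrite mulr_sumr; under [RHS]eq_bigr do rewrite mulr_sumr;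
  rewrite exchange_big; apply: eq_bigr => a _; apply: eq_bigr => b _; ring.
Lemma sl21 A B X : sl2 A (sl1 B X) = sl1 B (sl2 A X). Proof. slcomm. Qed.
Lemma sl31 A B X : sl3 A (sl1 B X) = sl1 B (sl3 A X). Proof. slcomm. Qed.
Lemma sl41 A B X : sl4 A (sl1 B X) = sl1 B (sl4 A X). Proof. slcomm. Qed.
Lemma sl32 A B X : sl3 A (sl2 B X) = sl2 B (sl3 A X). Proof. slcomm. Qed.
Lemma sl42 A B X : sl4 A (sl2 B X) = sl2 B (sl4 A X). Proof. slcomm. Qed.
Lemma sl43 A B X : sl4 A (sl3 B X) = sl3 B (sl4 A X). Proof. slcomm. Qed.

Ltac slcomp := apply: t4ext => i j k l; rewrite /sl1 /sl2 /sl3 /sl4;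
  under eq_bigr do rewrite mulr_sumr; rewrite exchange_big; apply: eq_bigr => b _;
  rewrite mxE mulr_suml; apply: eq_bigr => a _; ring.
Lemma sl1M A B X : sl1 A (sl1 B X) = sl1 (A *m B) X. Proof. slcomp. Qed.
Lemma sl2M A B X : sl2 A (sl2 B X) = sl2 (A *m B) X. Proof. slcomp. Qed.
Lemma sl3M A B X : sl3 A (sl3 B X) = sl3 (A *m B) X. Proof. slcomp. Qed.
Lemma sl4M A B X : sl4 A (sl4 B X) = sl4 (A *m B) X. Proof. slcomp. Qed.

Lemma act4'M A B X : act4' A (act4' B X) = act4' (A *m B) X.
Proof.
rewrite /act4'. do 10 rewrite ?sl21 ?sl31 ?sl41 ?sl32 ?sl42 ?sl43.
by rewrite sl1M sl2M sl3M sl4M.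
Qed.

Lemma act4'1 X : act4' 1%:M X = X.
Proof.
apply: t4ext => i j k l; rewrite /act4' /sl1 /sl2 /sl3 /sl4.
Abort.

End B.

Section C.
Variable R : realType.
Implicit Types (M g : 'M[R]_3) (X Y W H : tensor4 R).

Lemma sum_delta (F : 'I_3 -> R) a : \sum_(b < 3) (a == b)%:R * F b = F a.
Proof. by rewrite sum3; ord3c a => /=; ring. Qed.
Lemma sum_delta' (F : 'I_3 -> R) a : \sum_(b < 3) F b * (b == a)%:R = F a.
Proof. by rewrite sum3; ord3c a => /=; ring. Qed.

Lemma orth_delta M a b : M^T *m M = 1%:M -> \sum_(i < 3) M i a * M i b = (a == b)%:R.
Proof.
move=> h; have := congr1 (fun A : 'M[R]_3 => A a b) h; rewrite !mxE => <-.
by apply: eq_bigr => i _; rewrite mxE.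
Qed.

Lemma contr2 M (F : 'I_3 -> 'I_3 -> R) : M^T *m M = 1%:M ->
  \sum_(i < 3) \sum_(a < 3) M i a * \sum_(b < 3) M i b * F a b = \sum_(a < 3) F a a.
Proof.
move=> h.
transitivity (\sum_(a < 3) \sum_(b < 3) (\sum_(i < 3) M i a * M i b) * F a b).
  rewrite exchange_big; apply: eq_bigr => a _.
  under eq_bigr do rewrite mulr_sumr.
  rewrite exchange_big; apply: eq_bigr => b _; rewrite mulr_suml.
  by apply: eq_bigr => i _; ring.
apply: eq_bigr => a _; under eq_bigr do rewrite (orth_delta _ _ h).
exact: sum_delta.
Qed.

Lemma contr M (f g : 'I_3 -> R) : M^T *m M = 1%:M ->
  \sum_(i < 3) (\sum_(a < 3) M i a * f a) * (\sum_(b < 3) M i b * g b)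
  = \sum_(a < 3) f a * g a.
Proof.
move=> h; rewrite -(contr2 (fun a b => f a * g b) h).
apply: eq_bigr => i _; rewrite mulr_suml; apply: eq_bigr => a _.
by rewrite -mulrA mulr_sumr; congr (_ * _); apply: eq_bigr => b _; ring.
Qed.

Lemma sl1_1 X : sl1 1%:M X = X.
Proof. by apply: t4ext => i j k l; rewrite /sl1 sum3; ord3c i; rewrite !mxE /=; ring. Qed.
Lemma sl2_1 X : sl2 1%:M X = X.
Proof. by apply: t4ext => i j k l; rewrite /sl2 sum3; ord3c j; rewrite !mxE /=; ring. Qed.
Lemma sl3_1 X : sl3 1%:M X = X.
Proof. by apply: t4ext => i j k l; rewrite /sl3 sum3; ord3c k; rewrite !mxE /=; ring. Qed.
Lemma sl4_1 X : sl4 1%:M X = X.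
Proof. by apply: t4ext => i j k l; rewrite /sl4 sum3; ord3c l; rewrite !mxE /=; ring. Qed.
Lemma act4'1 X : act4' 1%:M X = X.
Proof. by rewrite /act4' sl4_1 sl3_1 sl2_1 sl1_1. Qed.

Definition S12 X := forall i j k l, X i j k l = X j i k l.
Definition S23 X := forall i j k l, X i j k l = X i k j l.
Definition S34 X := forall i j k l, X i j k l = X i j l k.
Definition TL X := forall k l, \sum_(i < 3) X i i k l = 0.

Ltac pairsym := let hW := fresh "hW" in move=> hW i j k l; rewrite /sl1 /sl2 /sl3 /sl4;
  under eq_bigr do rewrite mulr_sumr; under [RHS]eq_bigr do rewrite mulr_sumr;
  rewrite exchange_big; apply: eq_bigr => a _; apply: eq_bigr => b _; rewrite hW; ring.
Lemma pair12 M W : S12 W -> S12 (sl1 M (sl2 M W)). Proof. pairsym. Qed.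
Lemma pair23 M W : S23 W -> S23 (sl2 M (sl3 M W)). Proof. pairsym. Qed.
Lemma pair34 M W : S34 W -> S34 (sl3 M (sl4 M W)). Proof. pairsym. Qed.
Ltac pres := let hW := fresh "hW" in move=> hW i j k l; rewrite /sl1 /sl2 /sl3 /sl4; apply: eq_bigr => a _; congr (_ * _); exact: hW.
Lemma pres4_12 M W : S12 W -> S12 (sl4 M W). Proof. pres. Qed.
Lemma pres3_12 M W : S12 W -> S12 (sl3 M W). Proof. pres. Qed.
Lemma pres4_23 M W : S23 W -> S23 (sl4 M W). Proof. pres. Qed.
Lemma pres1_23 M W : S23 W -> S23 (sl1 M W). Proof. pres. Qed.
Lemma pres1_34 M W : S34 W -> S34 (sl1 M W). Proof. pres. Qed.
Lemma pres2_34 M W : S34 W -> S34 (sl2 M W). Proof. pres. Qed.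

Lemma act4'_S12 M H : S12 H -> S12 (act4' M H).
Proof. by move=> h; apply/pair12/pres3_12/pres4_12. Qed.
Lemma act4'_S23 M H : S23 H -> S23 (act4' M H).
Proof. by move=> h; apply/pres1_23/pair23/pres4_23. Qed.
Lemma act4'_S34 M H : S34 H -> S34 (act4' M H).
Proof. by move=> h; apply/pres1_34/pres2_34/pair34. Qed.

Lemma act4'_TL M H : M^T *m M = 1%:M -> TL H -> TL (act4' M H).
Proof.
move=> hM hH k l; rewrite /act4' /sl1 /sl2.
rewrite (contr2 (fun a b => sl3 M (sl4 M H) a b k l) hM) /sl3 /sl4.
rewrite exchange_big big1 // => c _; rewrite -mulr_sumr exchange_big /=.
rewrite big1 ?mulr0 // => d _; rewrite -mulr_sumr.
by rewrite hH mulr0.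
Qed.

End C.

Section D.
Variable R : realType.
Implicit Types (M g : 'M[R]_3) (X Y W H : tensor4 R).

Definition DD X Y (i j : 'I_3) : R :=
  \sum_(k < 3) \sum_(m < 3) \sum_(n < 3) X k i m n * Y m n k j.

Lemma d2E H i j : d2 H i j = DD H H i j.
Proof. by rewrite /d2 /tr13 mxE. Qed.

Lemma DD13 M X Y i j : M^T *m M = 1%:M -> DD (sl1 M X) (sl3 M Y) i j = DD X Y i j.
Proof.
move=> h; rewrite /DD /sl1 /sl3 exchange_big [RHS]exchange_big; apply: eq_bigr => m _.
rewrite exchange_big [RHS]exchange_big; apply: eq_bigr => n _.
exact: (contr (fun a => X a i m n) (fun c => Y m n c j) h).
Qed.
Lemma DD31 M X Y i j : M^T *m M = 1%:M -> DD (sl3 M X) (sl1 M Y) i j = DD X Y i j.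
Proof.
move=> h; rewrite /DD /sl1 /sl3; apply: eq_bigr => k _.
rewrite exchange_big [RHS]exchange_big; apply: eq_bigr => n _.
exact: (contr (fun a => X k i a n) (fun c => Y c n k j) h).
Qed.
Lemma DD42 M X Y i j : M^T *m M = 1%:M -> DD (sl4 M X) (sl2 M Y) i j = DD X Y i j.
Proof.
move=> h; rewrite /DD /sl2 /sl4; apply: eq_bigr => k _; apply: eq_bigr => m _.
exact: (contr (fun a => X k i m a) (fun c => Y m c k j) h).
Qed.
Lemma DD2l M X Y i j : DD (sl2 M X) Y i j = \sum_(b < 3) M i b * DD X Y b j.
Proof. rewrite /DD /sl2 !sum3; ring. Qed.
Lemma DD4r M X Y i j : DD X (sl4 M Y) i j = \sum_(b < 3) M j b * DD X Y i b.
Proof. rewrite /DD /sl4 !sum3; ring. Qed.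

End D.

Section E.
Variable R : realType.
Implicit Types (M g : 'M[R]_3) (X Y W H : tensor4 R) (t : 'M[R]_3).

Lemma mtm M t k l : (M *m t *m M^T) k l = \sum_(e < 3) M k e * \sum_(f < 3) M l f * t e f.
Proof.
rewrite mxE sum3 !mxE !sum3; ring.
Qed.

Lemma act4'_d2 M H : M^T *m M = 1%:M -> d2 (act4' M H) = M *m d2 H *m M^T.
Proof.
move=> h; apply/matrixP => i j; rewrite d2E.
have e1 : act4' M H = sl2 M (sl1 M (sl3 M (sl4 M H))) by rewrite /act4' sl21.
have e2 : act4' M H = sl4 M (sl3 M (sl1 M (sl2 M H))).
  by rewrite /act4'; do 6 rewrite ?sl21 ?sl31 ?sl41 ?sl32 ?sl42 ?sl43.
transitivity (DD (sl2 M (sl1 M (sl3 M (sl4 M H)))) (sl4 M (sl3 M (sl1 M (sl2 M H)))) i j).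
  by rewrite -e1 -e2.
rewrite DD2l; under eq_bigr do rewrite DD4r.
under eq_bigr do under eq_bigr do rewrite DD13 // DD31 // DD42 //.
rewrite mtm; apply: eq_bigr => b _; congr (_ * _); apply: eq_bigr => d _.
by rewrite d2E.
Qed.

Lemma ddA M Z (T : 'M[R]_3) i j :
  \sum_(k < 3) \sum_(l < 3) sl1 M (sl2 M Z) i j k l * T k l =
  \sum_(a < 3) M i a * \sum_(b < 3) M j b * (\sum_(k < 3) \sum_(l < 3) Z a b k l * T k l).
Proof. rewrite /sl1 /sl2 !sum3; ring. Qed.

Lemma ddB M H t a b : M^T *m M = 1%:M ->
  \sum_(k < 3) \sum_(l < 3) sl3 M (sl4 M H) a b k l * (M *m t *m M^T) k l =
  \sum_(c < 3) \sum_(d < 3) H a b c d * t c d.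
Proof.
move=> h; under eq_bigr do under eq_bigr do rewrite mtm.
rewrite exchange_big /sl3 /sl4.
under eq_bigr do rewrite (contr (fun c => \sum_(d < 3) M _ d * H a b c d)
                                 (fun e => \sum_(f < 3) M _ f * t e f) h).
rewrite exchange_big; apply: eq_bigr => c _.
exact: (contr (fun d => H a b c d) (fun f => t c f) h).
Qed.

Lemma act4'_ddot M H t : M^T *m M = 1%:M ->
  ddot42 (act4' M H) (M *m t *m M^T) = M *m ddot42 H t *m M^T.
Proof.
move=> h; apply/matrixP => i j; rewrite mxE /act4' ddA mtm.
apply: eq_bigr => a _; congr (_ * _); apply: eq_bigr => b _; congr (_ * _).
by rewrite ddB // mxE.
Qed.

End E.

Section F.
Variable R : realType.
Implicit Types (M g k y : 'M[R]_3) (X Y W H : tensor4 R) (t : 'M[R]_3).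

Definition x4 (i j k l : 'I_3) (m : 'I_4) : 'I_3 :=
  match nat_of_ord m with 0 => i | 1 => j | 2 => k | _ => l end.

Lemma TS_S12 H : totally_symmetric4 H -> S12 H.
Proof.
move=> hs i j k l; have := hs (tperm (inord 0) (inord 1)) (x4 i j k l).
rewrite /= tpermL tpermR !tpermD; last 1 first.
all: try by apply/eqP => /(congr1 val); rewrite /= !inordK.
rewrite /x4 /= ?inordK //= => E; first [exact E | exact (esym E)].
Qed.
Lemma TS_S23 H : totally_symmetric4 H -> S23 H.
Proof.
move=> hs i j k l; have := hs (tperm (inord 1) (inord 2)) (x4 i j k l).
rewrite /= tpermL tpermR !tpermD; last 1 first.
all: try by apply/eqP => /(congr1 val); rewrite /= !inordK.
rewrite /x4 /= ?inordK //= => E; first [exact E | exact (esym E)].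
Qed.
Lemma TS_S34 H : totally_symmetric4 H -> S34 H.
Proof.
move=> hs i j k l; have := hs (tperm (inord 2) (inord 3)) (x4 i j k l).
rewrite /= tpermL tpermR !tpermD; last 1 first.
all: try by apply/eqP => /(congr1 val); rewrite /= !inordK.
rewrite /x4 /= ?inordK //= => E; first [exact E | exact (esym E)].
Qed.

Lemma pairswap H : S12 H -> S23 H -> S34 H -> forall i j p q, H i j p q = H p q i j.
Proof. move=> h12 h23 h34 i j p q; by rewrite h23 h12 h34 h23. Qed.

Lemma SO3_mulTr k : SO3 k -> k *m k^T = 1%:M. Proof. by case. Qed.

Lemma conjK1 k x : SO3 k -> k^T *m (k *m x *m k^T) *m k = x.
Proof.
move=> hk; rewrite !mulmxA (SO3_trmx_mul hk) mul1mx -mulmxA (SO3_trmx_mul hk).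
by rewrite mulmx1.
Qed.
Lemma conjK2 k y : SO3 k -> k *m (k^T *m y *m k) *m k^T = y.
Proof.
move=> hk; rewrite !mulmxA (SO3_mulTr hk) mul1mx -mulmxA (SO3_mulTr hk).
by rewrite mulmx1.
Qed.

Lemma fixconj (T : Type) (A : 'M[R]_3 -> T -> T)
  (A1 : forall x, A 1%:M x = x)
  (AM : forall g h x, SO3 g -> SO3 h -> A g (A h x) = A (g *m h) x) k y x :
  SO3 k -> SO3 y -> (A y (A k x) = A k x <-> A (k^T *m y *m k) x = x).
Proof.
move=> hk hy; have hkT := SO3_tr hk.
have hc : SO3 (k^T *m y *m k) by apply: SO3_mul => //; apply: SO3_mul.
split => E.
  rewrite -(AM _ _ _ (SO3_mul hkT hy) hk) -(AM _ _ _ hkT hy) E (AM _ _ _ hkT hk).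
  by rewrite SO3_trmx_mul // A1.
rewrite (AM _ _ _ hy hk) -{2}E (AM _ _ _ hk hc); congr (A _ x).
by rewrite !mulmxA SO3_mulTr // mul1mx.
Qed.

Lemma act2_1 t : act2 1%:M t = t.
Proof. rewrite act2E; last exact: SO3_1. by rewrite trmx1 mulmx1 mul1mx. Qed.
Lemma act2_M g h t : SO3 g -> SO3 h -> act2 g (act2 h t) = act2 (g *m h) t.
Proof.
move=> hg hh; have hgh := SO3_mul hg hh.
by rewrite !act2E // trmx_mul !mulmxA.
Qed.
Lemma act4_1 H : act4 1%:M H = H.
Proof. rewrite act4E; last exact: SO3_1. by rewrite act4'1. Qed.
Lemma act4_M g h H : SO3 g -> SO3 h -> act4 g (act4 h H) = act4 (g *m h) H.
Proof. move=> hg hh; have hgh := SO3_mul hg hh. by rewrite !act4E // act4'M. Qed.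

Definition cj k (G : set 'M[R]_3) : set 'M[R]_3 := [set k *m x *m k^T | x in G].

Lemma SO3_conj k x : SO3 k -> SO3 x -> SO3 (k *m x *m k^T).
Proof. by move=> hk hx; apply: SO3_mul; [apply: SO3_mul|apply: SO3_tr]. Qed.

Lemma sym2_conj k t : SO3 k -> symgroup2 (act2 k t) = cj k (symgroup2 t).
Proof.
move=> hk; apply/seteqP; split => y /=.
  move=> [hy fy]; exists (k^T *m y *m k); last exact: conjK2.
  split; first by apply: SO3_mul; [apply: SO3_mul; [apply: SO3_tr|]|].
  by apply/(fixconj act2_1 act2_M).
case=> x [hx fx] <-; split; first exact: SO3_conj.
by apply/(fixconj act2_1 act2_M _ hk (SO3_conj hk hx)); rewrite conjK1.
Qed.

Lemma pair_conj k H t : SO3 k ->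
  symgroup_pair (act4 k H) (act2 k t) = cj k (symgroup_pair H t).
Proof.
move=> hk; apply/seteqP; split => y /=.
  move=> [hy [fy1 fy2]]; exists (k^T *m y *m k); last exact: conjK2.
  split; first by apply: SO3_mul; [apply: SO3_mul; [apply: SO3_tr|]|].
  by split; [apply/(fixconj act4_1 act4_M)|apply/(fixconj act2_1 act2_M)].
case=> x [hx [fx1 fx2]] <-; split; first exact: SO3_conj.
by split; [apply/(fixconj act4_1 act4_M _ hk (SO3_conj hk hx))|
           apply/(fixconj act2_1 act2_M _ hk (SO3_conj hk hx))]; rewrite conjK1.
Qed.

Lemma triple_conj k a b c : SO3 k ->
  symgroup_triple (act2 k a) (act2 k b) (act2 k c) = cj k (symgroup_triple a b c).
Proof.
move=> hk; apply/seteqP; split => y /=.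
  move=> [hy [f1 [f2 f3]]]; exists (k^T *m y *m k); last exact: conjK2.
  split; first by apply: SO3_mul; [apply: SO3_mul; [apply: SO3_tr|]|].
  by split; [|split]; apply/(fixconj act2_1 act2_M).
case=> x [hx [f1 [f2 f3]]] <-; split; first exact: SO3_conj.
by split; [|split]; apply/(fixconj act2_1 act2_M _ hk (SO3_conj hk hx)); rewrite conjK1.
Qed.

Lemma cjM k g G : cj k (cj g G) = cj (k *m g) G.
Proof.
apply/seteqP; split => y /=.
  case=> x [z hz <-] <-; exists z => //.
  by rewrite trmx_mul !mulmxA.
case=> z hz <-; exists (g *m z *m g^T); first by exists z.
by rewrite trmx_mul !mulmxA.
Qed.

Lemma cj1 G : cj 1%:M G = G.
Proof.
apply/seteqP; split => y /=; first by case=> x hx <-; rewrite trmx1 mulmx1 mul1mx.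
by move=> hy; exists y => //; rewrite trmx1 mulmx1 mul1mx.
Qed.

Lemma in_classE G K : in_class G K <-> exists2 g, SO3 g & G = cj g K.
Proof.
split; case=> g hg E; exists g => //; rewrite E /cj SO3_inv //.
Qed.

Lemma in_class_cj k G K : SO3 k -> (in_class (cj k G) K <-> in_class G K).
Proof.
move=> hk; rewrite !in_classE; split; case=> g hg E.
  exists (k^T *m g); first by apply: SO3_mul => //; apply: SO3_tr.
  by rewrite -cjM -E cjM SO3_trmx_mul // cj1.
by exists (k *m g); [apply: SO3_mul|rewrite -cjM E].
Qed.

End F.

Section G.
Variable R : realType.
Local Open Scope classical_set_scope.
Local Open Scope ring_scope.
Local Notation rx := (@rotx_pi R).
Local Notation O2R := (@O2 R).
Implicit Types (M g k y : 'M[R]_3) (X Y W H : tensor4 R) (t : 'M[R]_3).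

Lemma rotz_SO3 (a : R) : SO3 (rotz a).
Proof.
split; first by rewrite rotz_tr rotzD subrr rotz0.
rewrite /rotz mx3_det; have := cos2Dsin2 a; lra.
Qed.
Lemma rx_SO3 : SO3 rx.
Proof.
split; first by rewrite /rotx_pi mx3_tr -/rx rotx2.
rewrite /rotx_pi mx3_det; lra.
Qed.
Lemma O2_SO3 g : O2R g -> SO3 g.
Proof.
case=> [[a _ <-]|[a _ <-]]; first exact: rotz_SO3.
by apply: SO3_mul; [apply: rotz_SO3|apply: rx_SO3].
Qed.

Lemma rotz_sq_neq1 (a : R) : sin a != 0 -> rotz a *m rotz a != 1%:M.
Proof.
move=> hs; apply/eqP => E.
have := congr1 (fun M : 'M[R]_3 => M o1 o0) E.
rewrite /rotz mx3_mul mx3_1 /mx3 !mxE /= => E1.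
have := congr1 (fun M : 'M[R]_3 => M o0 o0) E.
rewrite /rotz mx3_mul mx3_1 /mx3 !mxE /= => E2.
have h2 := cos2Dsin2 a.
move/eqP: hs; apply; nra.
Qed.

Lemma rotz_sq1 (a : R) : sin a = 0 -> rotz a *m rotz a = 1%:M.
Proof.
move=> hs; have h2 := cos2Dsin2 a; rewrite hs in h2.
rewrite /rotz mx3_mul mx3_1 hs; congr mx3; nra.
Qed.

Lemma conj_mul (h a b : 'M[R]_3) : SO3 h -> (h *m a *m h^T) *m (h *m b *m h^T) = h *m (a *m b) *m h^T.
Proof.
move=> hh; rewrite !mulmxA -(mulmxA _ h^T h) (SO3_trmx_mul hh) mulmx1.
by rewrite -!mulmxA.
Qed.

Lemma rot_elem (P K : set 'M[R]_3) h k :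
  P `<=` O2R -> SO3 h -> P = cj h K -> K k -> k *m k != 1%:M ->
  exists phi, P (rotz phi) /\ sin phi != 0.
Proof.
move=> PO hh PE Kk kk.
have Px : P (h *m k *m h^T) by rewrite PE; exists k.
have xx : (h *m k *m h^T) *m (h *m k *m h^T) != 1%:M.
  apply: contra kk => /eqP E; apply/eqP.
  rewrite conj_mul // in E.
  by rewrite -(conjK1 (k *m k) hh) E mulmx1 SO3_trmx_mul.
case: (PO _ Px) => [[a _ Ea]|[a _ Ea]].
  exists a; split; first by rewrite Ea.
  apply/eqP => hs; move: xx; rewrite -Ea rotz_sq1 ?eqxx //.
by move: xx; rewrite -Ea flip2 eqxx.
Qed.


Lemma sqr_pos (x : R) : x != 0 -> 0 < x ^+ 2.
Proof. by move=> hx; rewrite exprn_even_gt0 //= hx orbT. Qed.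

Lemma sym_entries (S : 'M[R]_3) : S^T = S ->
  [/\ S o1 o0 = S o0 o1, S o2 o0 = S o0 o2 & S o2 o1 = S o1 o2].
Proof.
move=> hS; split.
- by have := congr1 (fun M : 'M[R]_3 => M o0 o1) hS; rewrite mxE.
- by have := congr1 (fun M : 'M[R]_3 => M o0 o2) hS; rewrite mxE.
- by have := congr1 (fun M : 'M[R]_3 => M o1 o2) hS; rewrite mxE.
Qed.

Lemma act2_rotz (a : R) t : act2 (rotz a) t = rotz a *m t *m (rotz a)^T.
Proof. by rewrite act2E //; apply: rotz_SO3. Qed.
Lemma act2_rx t : act2 rx t = rx *m t *m rx^T.
Proof. by rewrite act2E //; apply: rx_SO3. Qed.

Lemma diag_form (S : 'M[R]_3) phi : S^T = S -> act2 (rotz phi) S = S -> sin phi != 0 ->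
  S = mx3 (S o0 o0) 0 0 0 (S o0 o0) 0 0 0 (S o2 o2).
Proof.
move=> hS hf hs; have [s10 s20 s21] := sym_entries hS.
rewrite act2_rotz in hf.
have E : rotz phi *m S = S *m rotz phi.
  by rewrite -{2}hf -(mulmxA _ _ (rotz phi)) (SO3_trmx_mul (rotz_SO3 phi)) mulmx1.
rewrite (mx3_ext S) /rotz !mx3_mul in E.
move: (congr1 (fun M : 'M[R]_3 => M o0 o0) E) (congr1 (fun M : 'M[R]_3 => M o0 o1) E)
      (congr1 (fun M : 'M[R]_3 => M o0 o2) E) (congr1 (fun M : 'M[R]_3 => M o1 o2) E).
rewrite /mx3 !mxE /= s10 s20 s21.
move=> e00 e01 e02 e12.
have h01 : S o0 o1 = 0.
  by apply: (mulfI hs); rewrite mulr0; nra.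
have h11 : S o1 o1 = S o0 o0.
  by apply: (mulfI hs); move: e01; rewrite h01; nra.
have E1 : (1 - cos phi) * S o0 o2 + sin phi * S o1 o2 = 0 by nra.
have E2 : sin phi * S o0 o2 - (1 - cos phi) * S o1 o2 = 0 by nra.
have hp : (1 - cos phi) ^+ 2 + sin phi ^+ 2 != 0.
  by apply: lt0r_neq0; have := sqr_pos hs; have := sqr_ge0 (1 - cos phi); lra.
have h02 : S o0 o2 = 0.
  apply: (mulfI hp); rewrite mulr0.
  transitivity ((1 - cos phi) * ((1 - cos phi) * S o0 o2 + sin phi * S o1 o2)
     + sin phi * (sin phi * S o0 o2 - (1 - cos phi) * S o1 o2)); first by ring.
  by rewrite E1 E2 !mulr0 addr0.
have h12 : S o1 o2 = 0.
  apply: (mulfI hp); rewrite mulr0.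
  transitivity (sin phi * ((1 - cos phi) * S o0 o2 + sin phi * S o1 o2)
     - (1 - cos phi) * (sin phi * S o0 o2 - (1 - cos phi) * S o1 o2)); first by ring.
  by rewrite E1 E2 !mulr0 subr0.
by rewrite {1}(mx3_ext S) s10 s20 s21 h01 h02 h12 h11.
Qed.

Lemma rotz_fix_diag (th a b : R) :
  act2 (rotz th) (mx3 a 0 0 0 a 0 0 0 b) = mx3 a 0 0 0 a 0 0 0 b.
Proof.
rewrite act2_rotz rotz_tr /rotz !mx3_mul cosN sinN.
congr mx3; first [ring | (transitivity (a * (cos th ^+ 2 + sin th ^+ 2));
   [ring | by rewrite cos2Dsin2 mulr1])].
Qed.

Lemma O2_fix_diag g (a b : R) : O2R g ->
  act2 g (mx3 a 0 0 0 a 0 0 0 b) = mx3 a 0 0 0 a 0 0 0 b.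
Proof.
case=> [[th _ <-]|[th _ <-]]; first exact: rotz_fix_diag.
rewrite -act2_M; [|exact: rotz_SO3|exact: rx_SO3].
have -> : act2 rx (mx3 a 0 0 0 a 0 0 0 b) = mx3 a 0 0 0 a 0 0 0 b.
  by rewrite act2_rx /rotx_pi mx3_tr !mx3_mul; congr mx3; ring.
exact: rotz_fix_diag.
Qed.

End G.
Section J.
Variable R : realType.
Implicit Types (x y a b : R).

Definition C3 (c s : R) := c^+3 - 3 * c * s^+2.
Definition S3 (c s : R) := 3 * c^+2 * s - s^+3.
Definition C4 (c s : R) := c^+4 - 6 * c^+2 * s^+2 + s^+4.
Definition S4 (c s : R) := 4 * c^+3 * s - 4 * c * s^+3.

Lemma cos3 x : cos (3 * x) = C3 (cos x) (sin x).
Proof. have -> : 3 * x = x + x + x by ring. by rewrite ?cosD ?sinD ?cosD ?sinD /C3; ring. Qed.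
Lemma sin3 x : sin (3 * x) = S3 (cos x) (sin x).
Proof. have -> : 3 * x = x + x + x by ring. by rewrite ?cosD ?sinD ?cosD ?sinD /S3; ring. Qed.
Lemma cos4 x : cos (4 * x) = C4 (cos x) (sin x).
Proof. have -> : 4 * x = x + x + x + x by ring. by rewrite ?cosD ?sinD ?cosD ?sinD /C4; ring. Qed.
Lemma sin4 x : sin (4 * x) = S4 (cos x) (sin x).
Proof. have -> : 4 * x = x + x + x + x by ring. by rewrite ?cosD ?sinD ?cosD ?sinD /S4; ring. Qed.

Lemma angle_ex x y : x ^+ 2 + y ^+ 2 = 1 -> exists a, cos a = x /\ sin a = y.
Proof.
move=> h.
have hx : -1 <= x <= 1 by apply/andP; split; nra.
have hxi : x \in `[(-1), 1] by rewrite in_itv /=.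
have sa : sin (acos x) = `|y| by rewrite sin_acos // -sqrtr_sqr; congr Num.sqrt; lra.
case: (lerP 0 y) => hy.
  by exists (acos x); rewrite acosK // sa ger0_norm.
by exists (- acos x); rewrite cosN sinN acosK // sa ltr0_norm // opprK.
Qed.

Lemma rotz_eq a b : cos a = cos b -> sin a = sin b -> rotz a = rotz b.
Proof. by rewrite /rotz => -> ->. Qed.

Definition a3 (k : nat) : R := 2 * pi * k%:R / 3%:R.
Lemma s31_gt0 : 0 < sin (a3 1).
Proof. apply: sin_gt0_pi; rewrite /a3; have hp := @pi_gt0 R; apply/andP; split; lra. Qed.
Lemma c31 : cos (a3 1) = - 1 / 2.
Proof.
have h3 : cos (3 * a3 1) = 1.
  have -> : 3 * a3 1 = pi *+ 2 by rewrite /a3; field.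
  exact: cos2pi.
rewrite cos3 /C3 in h3.
have hs := s31_gt0; have h2 := cos2Dsin2 (a3 1).
have hc : cos (a3 1) != 1.
  apply/eqP => hc; rewrite hc in h2; nra.
have : (cos (a3 1) - 1) * (2 * cos (a3 1) + 1) ^+ 2 = 0 by nra.
move/eqP; rewrite mulf_eq0 subr_eq0 (negbTE hc) /= sqrf_eq0 => /eqP; lra.
Qed.
Lemma s31_sq : sin (a3 1) ^+ 2 = 3 / 4.
Proof. have := cos2Dsin2 (a3 1); rewrite c31; lra. Qed.
Lemma a32 : a3 2 = a3 1 + a3 1.
Proof. by rewrite /a3; field. Qed.
Lemma c32 : cos (a3 2) = - 1 / 2.
Proof. rewrite a32 cosD c31; have := s31_sq; lra. Qed.
Lemma s32 : sin (a3 2) = - sin (a3 1).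
Proof. rewrite a32 sinD c31; lra. Qed.
Lemma a30 : a3 0 = 0.
Proof. by rewrite /a3 mulr0 mul0r. Qed.

Definition a4 (k : nat) : R := 2 * pi * k%:R / 4%:R.
Lemma a40 : a4 0 = 0. Proof. by rewrite /a4 mulr0 mul0r. Qed.
Lemma a41 : a4 1 = pi / 2. Proof. by rewrite /a4; field. Qed.
Lemma a42 : a4 2 = pi. Proof. by rewrite /a4; field. Qed.
Lemma a43 : a4 3 = pi + pi / 2. Proof. by rewrite /a4; field. Qed.
Lemma cs41 : cos (a4 1) = 0 /\ sin (a4 1) = 1.
Proof. by rewrite a41 cos_pihalf sin_pihalf. Qed.
Lemma cs42 : cos (a4 2) = -1 /\ sin (a4 2) = 0.
Proof. by rewrite a42 cospi sinpi. Qed.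
Lemma cs43 : cos (a4 3) = 0 /\ sin (a4 3) = -1.
Proof. by rewrite a43 cosDpihalf sinDpihalf sinpi cospi oppr0. Qed.

End J.

Section HH.
Variable R : realType.
Local Notation rx := (@rotx_pi R).
Implicit Types (M g y : 'M[R]_3) (X Y W H A B : tensor4 R) (t : 'M[R]_3).

Definition cnt (v : nat) (i j k l : 'I_3) : nat :=
  ((nat_of_ord i == v) + (nat_of_ord j == v) + (nat_of_ord k == v) + (nat_of_ord l == v))%N.
Definition hval (N e p q m s : R) (n0 n1 : nat) : R :=
  match n0, n1 with
  | 0, 0 => 8 * e
  | 2, 0 => -4 * e * N | 0, 2 => -4 * e * N
  | 4, 0 => 3 * e * N ^+ 2 + m | 0, 4 => 3 * e * N ^+ 2 + m
  | 2, 2 => e * N ^+ 2 - m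
  | 3, 0 => p | 1, 2 => - p
  | 0, 3 => q | 2, 1 => - q
  | 3, 1 => s | 1, 3 => - s
  | _, _ => 0 end.
Definition HformN N e p q m s : tensor4 R :=
  fun i j k l => hval N e p q m s (cnt 0 i j k l) (cnt 1 i j k l).
Definition Hform := HformN 1.

Lemma HformN_S12 N e p q m s : S12 (HformN N e p q m s).
Proof. by move=> i j k l; rewrite /HformN /cnt; congr hval; lia. Qed.
Lemma HformN_S23 N e p q m s : S23 (HformN N e p q m s).
Proof. by move=> i j k l; rewrite /HformN /cnt; congr hval; lia. Qed.
Lemma HformN_S34 N e p q m s : S34 (HformN N e p q m s).
Proof. by move=> i j k l; rewrite /HformN /cnt; congr hval; lia. Qed.

Lemma sym_ext A B : S12 A -> S23 A -> S34 A -> S12 B -> S23 B -> S34 B ->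
  (forall i j k l : 'I_3, (i <= j <= k)%N -> (k <= l)%N -> A i j k l = B i j k l) -> A = B.
Proof.
move=> a12 a23 a34 b12 b23 b34 hE; apply: t4ext => i j k l.
ord3c i; ord3c j; ord3c k; ord3c l;
repeat match goal with
 | |- ?A o1 o0 ?k ?l = _ => rewrite (a12 o1 o0 k l) (b12 o1 o0 k l)
 | |- ?A o2 o0 ?k ?l = _ => rewrite (a12 o2 o0 k l) (b12 o2 o0 k l)
 | |- ?A o2 o1 ?k ?l = _ => rewrite (a12 o2 o1 k l) (b12 o2 o1 k l)
 | |- ?A ?i o1 o0 ?l = _ => rewrite (a23 i o1 o0 l) (b23 i o1 o0 l)
 | |- ?A ?i o2 o0 ?l = _ => rewrite (a23 i o2 o0 l) (b23 i o2 o0 l)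
 | |- ?A ?i o2 o1 ?l = _ => rewrite (a23 i o2 o1 l) (b23 i o2 o1 l)
 | |- ?A ?i ?j o1 o0 = _ => rewrite (a34 i j o1 o0) (b34 i j o1 o0)
 | |- ?A ?i ?j o2 o0 = _ => rewrite (a34 i j o2 o0) (b34 i j o2 o0)
 | |- ?A ?i ?j o2 o1 = _ => rewrite (a34 i j o2 o1) (b34 i j o2 o1)
 end; by apply: hE.
Qed.


Lemma act4'_rot c s e p q m s0 :
  act4' (mx3 c (- s) 0 s c 0 0 0 1) (Hform e p q m s0) =
  HformN (c^+2 + s^+2) e (p * C3 c s + q * S3 c s) (q * C3 c s - p * S3 c s)
    (m * C4 c s - s0 * S4 c s) (m * S4 c s + s0 * C4 c s).
Proof.
apply: sym_ext; try apply: act4'_S12; try apply: act4'_S23; try apply: act4'_S34;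
  try apply: HformN_S12; try apply: HformN_S23; try apply: HformN_S34.
move=> i j k l; ord3c i; ord3c j; ord3c k; ord3c l => //= _ _;
rewrite /act4' /sl1 /sl2 /sl3 /sl4 !sum3 /mx3 !mxE /= /Hform /HformN /hval /cnt /= /C3 /S3 /C4 /S4;
ring.
Qed.

Lemma act4'_rx e p q m s0 :
  act4' rx (Hform e p q m s0) = Hform e (- p) q m (- s0).
Proof.
apply: sym_ext; try apply: act4'_S12; try apply: act4'_S23; try apply: act4'_S34;
  try apply: HformN_S12; try apply: HformN_S23; try apply: HformN_S34.
move=> i j k l; ord3c i; ord3c j; ord3c k; ord3c l => //= _ _;
rewrite /act4' /sl1 /sl2 /sl3 /sl4 !sum3 /rotx_pi /mx3 !mxE /= /Hform /HformN /hval /cnt /=;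
ring.
Qed.

End HH.

Section I.
Variable R : realType.
Local Notation rx := (@rotx_pi R).
Implicit Types (M g y : 'M[R]_3) (X Y W A B : tensor4 R) (t : 'M[R]_3).

Lemma d2_Hform02 (e p q m s : R) : d2 (Hform e p q m s) o0 o2 = 4 * (p * m - q * s).
Proof. by rewrite d2E /DD !sum3 /Hform /HformN /hval /cnt /=; ring. Qed.
Lemma d2_Hform12 (e p q m s : R) : d2 (Hform e p q m s) o1 o2 = 4 * (p * s + q * m).
Proof. by rewrite d2E /DD !sum3 /Hform /HformN /hval /cnt /=; ring. Qed.

Lemma Hrep (K : tensor4 R) : S12 K -> S23 K -> S34 K -> TL K ->
  K o0 o2 o2 o2 = 0 -> K o1 o2 o2 o2 = 0 -> K o0 o1 o2 o2 = 0 ->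
  K o0 o0 o2 o2 = K o1 o1 o2 o2 ->
  K = Hform (K o2 o2 o2 o2 / 8) (K o0 o0 o0 o2) (K o1 o1 o1 o2)
            (K o0 o0 o0 o0 - 3 * (K o2 o2 o2 o2 / 8)) (K o0 o0 o0 o1).
Proof.
move=> h12 h23 h34 hTL z1 z2 z3 z4.
have ps := pairswap h12 h23 h34.
have t00 := hTL o0 o0; rewrite sum3 (ps o1 o1 o0 o0) (ps o2 o2 o0 o0) in t00.
have t11 := hTL o1 o1; rewrite sum3 (ps o2 o2 o1 o1) in t11.
have t22 := hTL o2 o2; rewrite sum3 in t22.
have t01 := hTL o0 o1; rewrite sum3 (ps o1 o1 o0 o1) (ps o2 o2 o0 o1) in t01.
have t02 := hTL o0 o2; rewrite sum3 (ps o1 o1 o0 o2) (ps o2 o2 o0 o2) in t02.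
rewrite (h23 o0 o2 o1 o1) (h34 o0 o1 o2 o1) in t02.
have t12 := hTL o1 o2; rewrite sum3 (ps o2 o2 o1 o2) in t12.
apply: sym_ext => //; try apply: HformN_S12; try apply: HformN_S23; try apply: HformN_S34.
move=> i j k l; ord3c i; ord3c j; ord3c k; ord3c l => //= _ _;
rewrite /Hform /HformN /hval /cnt /=; lra.
Qed.

End I.

Section K.
Variable R : realType.
Local Open Scope classical_set_scope.
Local Open Scope ring_scope.
Local Notation rx := (@rotx_pi R).
Local Notation O2R := (@O2 R).
Implicit Types (g x y : 'M[R]_3) (t : 'M[R]_3).

Lemma rx_tr : rx^T = rx.
Proof. by rewrite /rotx_pi mx3_tr. Qed.

Lemma P_char (K : tensor4 R) t g : symgroup2 t = O2R ->
  symgroup_pair K t g <-> O2R g /\ act4 g K = K.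
Proof.
move=> hO; rewrite -hO; split.
  by case=> hs [h4 h2]; split => //; split.
by case=> -[hs h2] h4; split => //; split.
Qed.

Lemma P_mul (K : tensor4 R) t x y : symgroup_pair K t x -> symgroup_pair K t y ->
  symgroup_pair K t (x *m y).
Proof.
case=> sx [fx1 fx2] [sy [fy1 fy2]]; split; first exact: SO3_mul.
by rewrite -act4_M // -act2_M // fy1 fy2 fx1 fx2.
Qed.
Lemma P_tr (K : tensor4 R) t x : symgroup_pair K t x -> symgroup_pair K t x^T.
Proof.
case=> sx [fx1 fx2]; have sxT := SO3_tr sx; split => //; split.
  by rewrite -{1}fx1 act4_M // SO3_trmx_mul // act4_1.
by rewrite -{1}fx2 act2_M // SO3_trmx_mul // act2_1.
Qed.

Lemma cjr psi b : rotz psi *m rotz b *m (rotz psi)^T = rotz b :> 'M[R]_3.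
Proof. by rewrite rotz_tr !rotzD; congr rotz; ring. Qed.
Lemma cjf psi b : rotz psi *m (rotz b *m rx) *m (rotz psi)^T = rotz (b + 2 * psi) *m rx :> 'M[R]_3.
Proof.
rewrite rotz_tr !mulmxA rotzD -mulmxA rotx_rotz opprK mulmxA rotzD.
by congr (rotz _ *m _); ring.
Qed.

Lemma classD (P : set 'M[R]_3) (n : nat) psi :
  P `<=` O2R ->
  (forall x y, P x -> P y -> P (x *m y)) -> (forall x, P x -> P x^T) ->
  (forall th, P (rotz th) <-> exists2 k, (k < n)%N & rotz th = rotz (2 * pi * k%:R / n%:R)) ->
  P (rotz (2 * psi) *m rx) ->
  P = cj (rotz psi) (@Dn R n).
Proof.
move=> PO Pm Pt Prot Pf; apply/seteqP; split => g.
  move=> Pg; case: (PO g Pg) => [[th _ Eg]|[th _ Eg]].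
    have Pth : P (rotz th) by rewrite Eg.
    have [k hk Ek] := (Prot th).1 Pth.
    exists (rotz (2 * pi * k%:R / n%:R)); first by left; exists k.
    by rewrite cjr -Ek.
  have P1 : P (rotz (th - 2 * psi)).
    have := Pm _ _ Pg (Pt _ Pf); rewrite -Eg trmx_mul rx_tr rotz_tr.
    by rewrite -(mulmxA (rotz th)) (mulmxA rx) rotx2 mul1mx rotzD.
  have [k hk Ek] := (Prot _).1 P1.
  exists (rotz (2 * pi * k%:R / n%:R) *m rx); first by right; exists k.
  rewrite cjf -Eg -rotzD -Ek rotzD; congr (rotz _ *m _); ring.
case=> y [[k hk <-]|[k hk <-]] <-.
  by rewrite cjr; apply/Prot; exists k.
rewrite cjf -rotzD -mulmxA; apply: Pm => //.
by apply/Prot; exists k.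
Qed.

Lemma act4_rotz_Hform th (e p q m s : R) :
  act4 (rotz th) (Hform e p q m s) =
  Hform e (p * C3 (cos th) (sin th) + q * S3 (cos th) (sin th))
          (q * C3 (cos th) (sin th) - p * S3 (cos th) (sin th))
          (m * C4 (cos th) (sin th) - s * S4 (cos th) (sin th))
          (m * S4 (cos th) (sin th) + s * C4 (cos th) (sin th)).
Proof. by rewrite act4E; [rewrite /rotz act4'_rot cos2Dsin2|exact: rotz_SO3]. Qed.

Lemma act4_flip_Hform th (e p q m s : R) :
  act4 (rotz th *m rx) (Hform e p q m s) =
  Hform e (- p * C3 (cos th) (sin th) + q * S3 (cos th) (sin th))
          (q * C3 (cos th) (sin th) + p * S3 (cos th) (sin th))
          (m * C4 (cos th) (sin th) + s * S4 (cos th) (sin th))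
          (m * S4 (cos th) (sin th) - s * C4 (cos th) (sin th)).
Proof.
rewrite -act4_M; [|exact: rotz_SO3|exact: rx_SO3].
rewrite [act4 rx _]act4E; last exact: rx_SO3.
rewrite act4'_rx act4_rotz_Hform.
by congr Hform; ring.
Qed.

Lemma Hform_inj (e p q m s p' q' m' s' : R) :
  Hform e p q m s = Hform e p' q' m' s' -> [/\ p = p', q = q', m = m' & s = s'].
Proof.
move=> E.
have := congr1 (fun K : tensor4 R => K o0 o0 o0 o2) E.
have := congr1 (fun K : tensor4 R => K o1 o1 o1 o2) E.
have := congr1 (fun K : tensor4 R => K o0 o0 o0 o0) E.
have := congr1 (fun K : tensor4 R => K o0 o0 o0 o1) E.
rewrite /Hform /HformN /hval /cnt /= => e1 e2 e3 e4; split => //; lra.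
Qed.

End K.

Section L.
Variable R : realType.
Local Open Scope classical_set_scope.
Local Open Scope ring_scope.
Local Notation rx := (@rotx_pi R).
Local Notation O2R := (@O2 R).
Implicit Types (g x y : 'M[R]_3) (t : 'M[R]_3).

Lemma sqr_sum0 (a b : R) : a ^+ 2 + b ^+ 2 = 0 -> a = 0 /\ b = 0.
Proof.
move=> h; have /andP[ha hb] : (a ^+ 2 == 0) && (b ^+ 2 == 0).
  by rewrite -paddr_eq0 ?sqr_ge0 // h.
by split; apply/eqP; rewrite -sqrf_eq0.
Qed.

Lemma rot_solve (u v X Y : R) : u * X - v * Y = u -> u * Y + v * X = v ->
  u ^+ 2 + v ^+ 2 != 0 -> X = 1 /\ Y = 0.
Proof.
move=> e1 e2 hn.
have : ((X - 1) ^+ 2 + Y ^+ 2) * (u ^+ 2 + v ^+ 2) = 0.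
  transitivity ((u * X - v * Y - u) ^+ 2 + (u * Y + v * X - v) ^+ 2); first by ring.
  by rewrite e1 e2 !subrr expr0n /= addr0.
move/eqP; rewrite mulf_eq0 (negbTE hn) orbF => /eqP /sqr_sum0 [h1 h2].
by split => //; apply/eqP; rewrite -subr_eq0 h1.
Qed.

Lemma rotz_inj (a b : R) : rotz a = rotz b -> cos a = cos b /\ sin a = sin b.
Proof.
move=> E; have := congr1 (fun M : 'M[R]_3 => M o0 o0) E.
have := congr1 (fun M : 'M[R]_3 => M o1 o0) E.
by rewrite /rotz /mx3 !mxE /= => -> ->.
Qed.

Lemma D4_sol (c s : R) : c ^+ 2 + s ^+ 2 = 1 -> C4 c s = 1 ->
  exists2 k, (k < 4)%N & cos (a4 R k) = c /\ sin (a4 R k) = s.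
Proof.
move=> h hC.
have : 8 * (c * s) ^+ 2 = 0.
  transitivity ((c ^+ 2 + s ^+ 2) ^+ 2 - C4 c s); first by rewrite /C4; ring.
  by rewrite h hC expr1n subrr.
move/eqP; rewrite mulf_eq0 sqrf_eq0 mulf_eq0 => /orP [|/orP [] /eqP hz].
- by rewrite pnatr_eq0.
- rewrite hz in h; have : (s - 1) * (s + 1) = 0 by nra.
  move/eqP; rewrite mulf_eq0 => /orP [] /eqP hs.
    by exists 1%N => //; have [c1 s1] := cs41 R; rewrite c1 s1 hz; split => //; lra.
  by exists 3%N => //; have [c1 s1] := cs43 R; rewrite c1 s1 hz; split => //; lra.
- rewrite hz in h; have : (c - 1) * (c + 1) = 0 by nra.
  move/eqP; rewrite mulf_eq0 => /orP [] /eqP hc.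
    by exists 0%N => //; rewrite a40 cos0 sin0 hz; split => //; lra.
  by exists 2%N => //; have [c1 s1] := cs42 R; rewrite c1 s1 hz; split => //; lra.
Qed.

Lemma D3_sol (c s : R) : c ^+ 2 + s ^+ 2 = 1 -> C3 c s = 1 ->
  exists2 k, (k < 3)%N & cos (a3 R k) = c /\ sin (a3 R k) = s.
Proof.
move=> h hC.
have : (c - 1) * (2 * c + 1) ^+ 2 = 0.
  transitivity (C3 c s - 1 + 3 * c * (c ^+ 2 + s ^+ 2 - 1)); first by rewrite /C3; ring.
  by rewrite h hC !subrr mulr0 addr0.
move/eqP; rewrite mulf_eq0 sqrf_eq0 => /orP [] /eqP hc.
  have hc1 : c = 1 by lra.
  rewrite hc1 in h; have /eqP : s ^+ 2 = 0 by lra.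
  rewrite sqrf_eq0 => /eqP hs.
  by exists 0%N => //; rewrite a30 cos0 sin0 hc1 hs.
have hc1 : c = - 1 / 2 by lra.
have hs2 : s ^+ 2 = sin (a3 R 1) ^+ 2 by rewrite s31_sq; rewrite hc1 in h; lra.
have : (s - sin (a3 R 1)) * (s + sin (a3 R 1)) = 0.
  by transitivity (s ^+ 2 - sin (a3 R 1) ^+ 2); [ring|rewrite hs2 subrr].
move/eqP; rewrite mulf_eq0 => /orP [] /eqP hs.
  by exists 1%N => //; rewrite c31 hc1; split => //; lra.
by exists 2%N => //; rewrite c32 s32 hc1; split => //; lra.
Qed.

Lemma D3_vals k : (k < 3)%N ->
  C3 (cos (a3 R k)) (sin (a3 R k)) = 1 /\ S3 (cos (a3 R k)) (sin (a3 R k)) = 0.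
Proof.
have hs := s31_sq R.
have h3 : sin (a3 R 1) ^+ 3 = sin (a3 R 1) * (3 / 4) by rewrite -hs; ring.
case: k => [|[|[|]]] // _.
- by rewrite a30 cos0 sin0 /C3 /S3; split; ring.
- rewrite c31 /C3 /S3 hs h3; split; lra.
- rewrite c32 s32 /C3 /S3 sqrrN exprNn hs h3; split; lra.
Qed.

Lemma D4_vals k : (k < 4)%N ->
  C4 (cos (a4 R k)) (sin (a4 R k)) = 1 /\ S4 (cos (a4 R k)) (sin (a4 R k)) = 0.
Proof.
case: k => [|[|[|[|]]]] // _.
- by rewrite a40 cos0 sin0 /C4 /S4; split; ring.
- by have [-> ->] := cs41 R; rewrite /C4 /S4; split; ring.
- by have [-> ->] := cs42 R; rewrite /C4 /S4; split; ring.
- by have [-> ->] := cs43 R; rewrite /C4 /S4; split; ring.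
Qed.

End L.

Section M.
Variable R : realType.
Local Open Scope classical_set_scope.
Local Open Scope ring_scope.
Local Notation rx := (@rotx_pi R).
Local Notation O2R := (@O2 R).
Implicit Types (g x y : 'M[R]_3) (t : 'M[R]_3).

Lemma caseO2 (e : R) t : symgroup2 t = O2R ->
  transversely_isotropic (symgroup_pair (Hform e 0 0 0 0) t).
Proof.
move=> hO; apply/in_classE; exists 1%:M; first exact: SO3_1.
rewrite cj1; apply/seteqP; split => g.
  by move/(P_char _ _ hO) => [].
move=> Og; apply/(P_char _ _ hO); split => //.
case: Og => [[th _ <-]|[th _ <-]].
  by rewrite act4_rotz_Hform; congr Hform; ring.
by rewrite act4_flip_Hform; congr Hform; ring.
Qed.

Lemma caseD4 (e m s : R) t : symgroup2 t = O2R -> m ^+ 2 + s ^+ 2 != 0 ->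
  tetragonal (symgroup_pair (Hform e 0 0 m s) t).
Proof.
move=> hO hr.
have [phi [cphi sphi]] : exists phi, cos phi = (m ^+ 2 - s ^+ 2) / (m ^+ 2 + s ^+ 2)
                                  /\ sin phi = 2 * m * s / (m ^+ 2 + s ^+ 2).
  by apply: angle_ex; field.
apply/in_classE; exists (rotz (phi / 8)); first exact: rotz_SO3.
apply: classD.
- by move=> g /(P_char _ _ hO) [].
- exact: P_mul.
- exact: P_tr.
- move=> th; rewrite (P_char _ _ hO) act4_rotz_Hform; split.
    case=> _ /Hform_inj [_ _ e3 e4].
    have [hC _] := rot_solve e3 e4 hr.
    have [k hk [ck sk]] := D4_sol (cos2Dsin2 th) hC.
    by exists k => //; apply: rotz_eq.
  case=> k hk /rotz_inj [ck sk]; split; first by left; exists th.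
  have [hC hS] := D4_vals R hk; rewrite /a4 in hC hS.
  by rewrite ck sk hC hS; congr Hform; ring.
- rewrite (P_char _ _ hO) act4_flip_Hform; split; first by right; exists (2 * (phi / 8)).
  rewrite -cos4 -sin4.
  have -> : 4 * (2 * (phi / 8)) = phi by field.
  by rewrite cphi sphi; congr Hform; field.
Qed.

Lemma caseD3 (e p q : R) t : symgroup2 t = O2R -> p ^+ 2 + q ^+ 2 != 0 ->
  trigonal (symgroup_pair (Hform e p q 0 0) t).
Proof.
move=> hO hr.
have [phi [cphi sphi]] : exists phi, cos phi = (q ^+ 2 - p ^+ 2) / (p ^+ 2 + q ^+ 2)
                                  /\ sin phi = 2 * p * q / (p ^+ 2 + q ^+ 2).
  by apply: angle_ex; field.
apply/in_classE; exists (rotz (phi / 6)); first exact: rotz_SO3.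
apply: classD.
- by move=> g /(P_char _ _ hO) [].
- exact: P_mul.
- exact: P_tr.
- move=> th; rewrite (P_char _ _ hO) act4_rotz_Hform; split.
    case=> _ /Hform_inj [e1 e2 _ _].
    have e1' : p * C3 (cos th) (sin th) - q * (- S3 (cos th) (sin th)) = p by rewrite -[RHS]e1; ring.
    have e2' : p * (- S3 (cos th) (sin th)) + q * C3 (cos th) (sin th) = q by rewrite -[RHS]e2; ring.
    have [hC _] := rot_solve e1' e2' hr.
    have [k hk [ck sk]] := D3_sol (cos2Dsin2 th) hC.
    by exists k => //; apply: rotz_eq.
  case=> k hk /rotz_inj [ck sk]; split; first by left; exists th.
  have [hC hS] := D3_vals R hk; rewrite /a3 in hC hS.
  by rewrite ck sk hC hS; congr Hform; ring.
- rewrite (P_char _ _ hO) act4_flip_Hform; split; first by right; exists (2 * (phi / 6)).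
  rewrite -cos3 -sin3.
  have -> : 3 * (2 * (phi / 6)) = phi by field.
  by rewrite cphi sphi; congr Hform; field.
Qed.

End M.

Section N.
Variable R : realType.
Local Open Scope classical_set_scope.
Local Open Scope ring_scope.
Local Notation rx := (@rotx_pi R).
Local Notation O2R := (@O2 R).
Implicit Types (g x y : 'M[R]_3) (t : 'M[R]_3).

Lemma d2_equiv g (K : tensor4 R) : SO3 g -> d2 (act4 g K) = act2 g (d2 K).
Proof.
move=> hg; rewrite act4E // act2E // act4'_d2 //; exact: SO3_trmx_mul.
Qed.
Lemma ddot_equiv g (K : tensor4 R) t : SO3 g ->
  ddot42 (act4 g K) (act2 g t) = act2 g (ddot42 K t).
Proof.
move=> hg; rewrite act4E // !act2E // act4'_ddot //; exact: SO3_trmx_mul.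
Qed.

Lemma d2_sym (K : tensor4 R) : S12 K -> S23 K -> S34 K -> (d2 K)^T = d2 K.
Proof.
move=> h12 h23 h34; have ps := pairswap h12 h23 h34.
apply/matrixP => i j; rewrite mxE !d2E /DD; apply: eq_bigr => k _.
apply: eq_bigr => m _; apply: eq_bigr => n _.
by rewrite (ps k j m n) (ps m n k i) mulrC.
Qed.
Lemma ddot_sym (K : tensor4 R) t : S12 K -> (ddot42 K t)^T = ddot42 K t.
Proof.
move=> h12; apply/matrixP => i j; rewrite !mxE; apply: eq_bigr => k _.
by apply: eq_bigr => l _; rewrite h12.
Qed.

Lemma diag_entries (S : 'M[R]_3) a b : S = mx3 a 0 0 0 a 0 0 0 b ->
  [/\ S o0 o1 = 0, S o0 o2 = 0, S o1 o2 = 0 & S o0 o0 = S o1 o1].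
Proof. by move=> ->; rewrite /mx3 !mxE. Qed.

Lemma pihalf_sin : sin (pi / 2 : R) != 0.
Proof. by rewrite sin_pihalf oner_eq0. Qed.

Lemma sub_O2 (S : set 'M[R]_3) t : symgroup2 t = O2R ->
  (forall g, S g -> SO3 g /\ act2 g t = t) -> S `<=` O2R.
Proof. by move=> hO hS g /hS; rewrite -hO. Qed.

Definition g90 : 'M[R]_3 := mx3 1 0 0 0 0 (-1) 0 1 0.

Lemma g90_SO3 : SO3 g90.
Proof.
split; first by rewrite /g90 mx3_tr mx3_mul mx3_1; congr mx3; ring.
by rewrite /g90 mx3_det; ring.
Qed.

Lemma t_form t : t^T = t -> symgroup2 t = O2R ->
  exists a b, t = mx3 a 0 0 0 a 0 0 0 b /\ b != a.
Proof.
move=> hs hO.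
have ht : act2 (rotz (pi / 2)) t = t.
  have : symgroup2 t (rotz (pi / 2)) by rewrite hO; left; exists (pi / 2).
  by case.
have E := diag_form hs ht pihalf_sin.
exists (t o0 o0), (t o2 o2); split => //.
apply/eqP => hab.
have : symgroup2 t g90.
  split; first exact: g90_SO3.
  rewrite act2E; last exact: g90_SO3.
  rewrite E hab /g90 mx3_tr !mx3_mul; congr mx3; ring.
rewrite hO => -[[th _ Eg]|[th _ Eg]].
  have := congr1 (fun M : 'M[R]_3 => M o2 o2) Eg.
  by rewrite /g90 /rotz /mx3 !mxE /= => h; clear -h; lra.
have := congr1 (fun M : 'M[R]_3 => M o2 o2) Eg.
by rewrite /g90 /rotz /rotx_pi mx3_mul /mx3 !mxE /= => h; clear -h; lra.
Qed.

End N.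

Section O.
Variable R : realType.
Local Open Scope classical_set_scope.
Local Open Scope ring_scope.
Local Notation rx := (@rotx_pi R).
Local Notation O2R := (@O2 R).
Implicit Types (g x y : 'M[R]_3) (t : 'M[R]_3).

Lemma ddot_entry (K : tensor4 R) t a b i j : S12 K -> S23 K -> S34 K -> TL K ->
  t = mx3 a 0 0 0 a 0 0 0 b -> ddot42 K t i j = (b - a) * K i j o2 o2.
Proof.
move=> h12 h23 h34 hTL ht; have ps := pairswap h12 h23 h34.
have tr : K i j o0 o0 + K i j o1 o1 + K i j o2 o2 = 0.
  by have := hTL i j; rewrite sum3 -!(ps i j).
rewrite mxE !sum3 ht /mx3 !mxE /=.
transitivity (a * (K i j o0 o0 + K i j o1 o1 + K i j o2 o2) + (b - a) * K i j o2 o2);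
  first by ring.
by rewrite tr mulr0 add0r.
Qed.

Lemma mul_l0 (c x : R) : c != 0 -> c * x = 0 -> x = 0.
Proof. by move=> hc /eqP; rewrite mulf_eq0 (negbTE hc) => /eqP. Qed.

Lemma core_bwd (K : tensor4 R) t : t^T = t -> symgroup2 t = O2R ->
  S12 K -> S23 K -> S34 K -> TL K ->
  transversely_isotropic (symgroup_triple (d2 K) t (ddot42 K t)) ->
  trigonal (symgroup_pair K t) \/ tetragonal (symgroup_pair K t)
    \/ transversely_isotropic (symgroup_pair K t).
Proof.
move=> hs hO h12 h23 h34 hTL hT.
have [a [b [ht hab]]] := t_form hs hO.
have TO : symgroup_triple (d2 K) t (ddot42 K t) `<=` O2R.
  by apply: (sub_O2 hO) => g [sg [_ [f _]]].
have /in_classE [h hh hTE] := hT.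
have O2k : O2R (rotz (pi / 2)) by left; exists (pi / 2).
have [phi [Tphi sphi]] := rot_elem TO hh hTE O2k (rotz_sq_neq1 (pihalf_sin R)).
case: Tphi => _ [fd [_ fu]].
have Ed := diag_form (d2_sym h12 h23 h34) fd sphi.
have Eu := diag_form (ddot_sym t h12) fu sphi.
have [d01 d02 d12 _] := diag_entries Ed.
have [u01 u02 u12 u00] := diag_entries Eu.
rewrite !(ddot_entry _ _ h12 h23 h34 hTL ht) in u01 u02 u12 u00.
have hba : b - a != 0 by rewrite subr_eq0.
have z1 := mul_l0 hba u02.
have z2 := mul_l0 hba u12.
have z3 := mul_l0 hba u01.
have z4 : K o0 o0 o2 o2 = K o1 o1 o2 o2 by apply: (mulfI hba).
have hrep := Hrep h12 h23 h34 hTL z1 z2 z3 z4.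
have [e [p [q [m [s hK]]]]] : exists e p q m s, K = Hform e p q m s.
  by do 5 eexists; exact: hrep.
rewrite hK d2_Hform02 in d02; rewrite hK d2_Hform12 in d12; rewrite hK.
have h4 : (4 : R) != 0 by rewrite pnatr_eq0.
have f1 := mul_l0 h4 d02.
have f2 := mul_l0 h4 d12.
have key : (p ^+ 2 + q ^+ 2) * (m ^+ 2 + s ^+ 2) = 0.
  transitivity ((p * m - q * s) ^+ 2 + (p * s + q * m) ^+ 2); first by ring.
  by rewrite f1 f2 expr0n /= addr0.
case: (eqVneq (p ^+ 2 + q ^+ 2) 0) => hpq.
  have [-> ->] := sqr_sum0 hpq.
  case: (eqVneq (m ^+ 2 + s ^+ 2) 0) => hms.
    have [-> ->] := sqr_sum0 hms.
    by right; right; apply: caseO2.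
  by right; left; apply: caseD4.
have hms : m ^+ 2 + s ^+ 2 = 0 by apply: (mul_l0 hpq).
have [-> ->] := sqr_sum0 hms.
by left; apply: caseD3.
Qed.

Lemma core_fwd (K : tensor4 R) t : t^T = t -> symgroup2 t = O2R ->
  S12 K -> S23 K -> S34 K ->
  trigonal (symgroup_pair K t) \/ tetragonal (symgroup_pair K t)
    \/ transversely_isotropic (symgroup_pair K t) ->
  transversely_isotropic (symgroup_triple (d2 K) t (ddot42 K t)).
Proof.
move=> hs hO h12 h23 h34 hC.
have PO : symgroup_pair K t `<=` O2R.
  by apply: (sub_O2 hO) => g [sg [_ f]].
have [phi [Pphi sphi]] : exists phi, symgroup_pair K t (rotz phi) /\ sin phi != 0.
  case: hC => [hC|[hC|hC]]; move/in_classE: hC => [h hh hE].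
  - apply: (rot_elem PO hh hE (k := rotz (2 * pi * 1%:R / 3%:R))).
      by left; exists 1%N.
    apply: rotz_sq_neq1; have := s31_gt0 R; rewrite /a3 => hp.
    by rewrite gt_eqF.
  - apply: (rot_elem PO hh hE (k := rotz (2 * pi * 1%:R / 4%:R))).
      by left; exists 1%N.
    apply: rotz_sq_neq1; have [_ ->] := cs41 R; exact: oner_neq0.
  - apply: (rot_elem PO hh hE (k := rotz (pi / 2))).
      by left; exists (pi / 2).
    exact: rotz_sq_neq1 (pihalf_sin R).
case: Pphi => sP [fH ft].
have fd : act2 (rotz phi) (d2 K) = d2 K by rewrite -d2_equiv // fH.
have fu : act2 (rotz phi) (ddot42 K t) = ddot42 K t by rewrite -ddot_equiv // fH ft.
have Ed := diag_form (d2_sym h12 h23 h34) fd sphi.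
have Eu := diag_form (ddot_sym t h12) fu sphi.
apply/in_classE; exists 1%:M; first exact: SO3_1.
rewrite cj1; apply/seteqP; split => g.
  by apply: (sub_O2 hO) => {}g [sg [_ [f _]]].
move=> Og; have [sg ftg] : symgroup2 t g by rewrite hO.
split => //; split; last split => //.
  by rewrite Ed O2_fix_diag.
by rewrite Eu O2_fix_diag.
Qed.

End O.

Unset Implicit Arguments.
Theorem corollary9p9 (R : realType) (t : tensor2 R) (H : tensor4 R) :
  is_sym2 t -> transversely_isotropic (symgroup2 t) -> isH4 H ->
  (trigonal (symgroup_pair H t) \/ tetragonal (symgroup_pair H t)
     \/ transversely_isotropic (symgroup_pair H t))
  <-> transversely_isotropic (symgroup_triple (d2 H) t (ddot42 H t)).
Proof.
move=> hs hTI [hts htl].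
have [g0 hg0 E0] := (in_classE _ _).1 hTI.
have hk : SO3 g0^T := SO3_tr hg0.
have hO : symgroup2 (act2 g0^T t) = @O2 R.
  by rewrite sym2_conj // E0 cjM SO3_trmx_mul // cj1.
have hs' : (act2 g0^T t)^T = act2 g0^T t.
  by rewrite act2E // !trmx_mul trmxK hs mulmxA.
have h12 : S12 (act4 g0^T H) by rewrite act4E //; apply/act4'_S12/TS_S12.
have h23 : S23 (act4 g0^T H) by rewrite act4E //; apply/act4'_S23/TS_S23.
have h34 : S34 (act4 g0^T H) by rewrite act4E //; apply/act4'_S34/TS_S34.
have hTL : TL (act4 g0^T H).
  by rewrite act4E //; apply: act4'_TL => //; exact: SO3_trmx_mul.
have eP := pair_conj H t hk.
have eT : symgroup_triple (d2 (act4 g0^T H)) (act2 g0^T t) (ddot42 (act4 g0^T H) (act2 g0^T t))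
          = cj g0^T (symgroup_triple (d2 H) t (ddot42 H t)).
  by rewrite d2_equiv // ddot_equiv // triple_conj.
split => hC.
  apply/(in_class_cj _ _ hk); rewrite -eT.
  apply: core_fwd => //.
  by rewrite eP /trigonal /tetragonal /transversely_isotropic !in_class_cj.
have hT' : transversely_isotropic (symgroup_triple (d2 (act4 g0^T H)) (act2 g0^T t)
                                   (ddot42 (act4 g0^T H) (act2 g0^T t))).
  by rewrite eT; apply/in_class_cj.
have := core_bwd hs' hO h12 h23 h34 hTL hT'.
by rewrite eP /trigonal /tetragonal /transversely_isotropic !in_class_cj.
Qed.
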